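(* Let $A(z)=\sum_{n\ge0}\Big(\sum_{P}\operatorname{amp}(P)\Big)z^n$, where the inner sum runs over all Motzkin paths $P$ of length $n$. Then $$A(z)=-(1+v+v^2)(1-v^{-2})\sum_{h\ge1}\frac{v^{h}}{1-v^{h}}-\frac{(1+2v)(1+v+v^2)}{v}.$$
   Context: A Motzkin path of length $n$ is a sequence of $n$ steps, each an up-step $(1,1)$, a down-step $(1,-1)$ or a horizontal step $(1,0)$, starting at $(0,0)$, ending at $(n,0)$, and never going below the $x$-axis. Its height $h$ is the maximal $y$-coordinate reached. A horizontal step on level $j$ is a horizontal step from $(x,j)$ to $(x+1,j)$. The amplitude $\operatorname{amp}(P)$ of a Motzkin path $P$ of height $h$ is $2h+1$ if $P$ has a horizontal step on level $h$, and $2h$ otherwise. Here $v=v(z)=\frac{1-z-\sqrt{1-2z-3z^2}}{2z}$ is the formal power series with $v(0)=0$ satisfying $z=\frac{v}{1+v+v^2}$. *)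

(* Defs.v *)
From HB Require Import structures.
From mathcomp Require Import all_boot all_order all_algebra.
From mathcomp Require Import all_classical all_reals all_analysis.
Set Implicit Arguments. Unset Strict Implicit. Unset Printing Implicit Defensive.
Import Order.TTheory GRing.Theory Num.Theory.
Import numFieldNormedType.Exports.

Inductive step := Up | Down | Flat.

Fixpoint words (n : nat) : seq (seq step) :=
  if n is n'.+1 then [seq s :: w | s <- [:: Up; Down; Flat], w <- words n']
  else [:: [::]].

(* Level after a step taken from level y (only used when it stays >= 0). *)
Definition next (y : nat) (s : step) : nat :=
  match s with Up => y.+1 | Down => y.-1 | Flat => y end.

Fixpoint motzkin_from (y : nat) (p : seq step) : bool :=
  match p with
  | [::] => y == 0
  | s :: p' => (if s is Down then 0 < y else true) && motzkin_from (next y s) p'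
  end.

Definition is_motzkin (p : seq step) : bool := motzkin_from 0 p.

Fixpoint maxh (y : nat) (p : seq step) : nat :=
  match p with
  | [::] => y
  | s :: p' => maxn y (maxh (next y s) p')
  end.

Definition height (p : seq step) : nat := maxh 0 p.

Fixpoint has_flat_at (j y : nat) (p : seq step) : bool :=
  match p with
  | [::] => false
  | s :: p' => (if s is Flat then y == j else false) || has_flat_at j (next y s) p'
  end.

Definition amp (p : seq step) : nat :=
  if has_flat_at (height p) 0 p then (height p).*2.+1 else (height p).*2.

Definition coefA (n : nat) : nat :=
  \sum_(p <- words n | is_motzkin p) amp p.

Local Open Scope ring_scope.

Definition vfun (R : realType) (z : R) : R :=
  (1 - z - Num.sqrt (1 - 2 * z - 3 * z ^+ 2)) / (2 * z).

(* h-th term (h >= 1, shifted index h = k+1) of sum_{h>=1} v^h/(1-v^h). *)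
Definition lterm (R : realType) (v : R) (k : nat) : R :=
  v ^+ k.+1 / (1 - v ^+ k.+1).

Definition rhsA (R : realType) (v : R) : R :=
  - (1 + v + v ^+ 2) * (1 - v ^- 2) * limn (series (lterm v))
  - (1 + 2 * v) * (1 + v + v ^+ 2) / v.

(* Main.v *)
Require Import Defs.
From HB Require Import structures.
From mathcomp Require Import all_boot all_order all_algebra.
From mathcomp Require Import all_classical all_reals all_analysis.
From mathcomp Require Import zify.
Import Order.TTheory GRing.Theory Num.Theory.
Import numFieldNormedType.Exports.
Set Implicit Arguments. Unset Strict Implicit. Unset Printing Implicit Defensive.

Definition step_code s := match s with Up => 0 | Down => 1 | Flat => 2 end.
Definition step_decode n := match n with 0 => Up | 1 => Down | _ => Flat end.
Lemma step_codeK : cancel step_code step_decode. Proof. by case. Qed.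
HB.instance Definition _ := Equality.copy step (can_type step_codeK).

Fixpoint strip (k y : nat) (p : seq step) : bool :=
  match p with
  | [::] => y == 0
  | s :: p' => (y.*2 <= k) &&
      (match s with Up => true | Down => 0 < y | Flat => y.*2.+1 <= k end)
      && strip k (Defs.next y s) p'
  end.

Lemma strip_gen k y p : strip k y p =
  [&& motzkin_from y p, maxh y p <= k./2 & odd k || ~~ has_flat_at k./2 y p].
Proof.
elim: p y => [|s p IH] y /=.
  by case: y => /= [|y]; rewrite ?orbT; lia.
rewrite IH geq_max.
have E : (y.*2 <= k) = (y <= k./2) by lia.
case: s => /=; rewrite E.
- by move: (y <= k./2) (motzkin_from _ _) (maxh _ _ <= _) => [] [] [].
- by move: (y <= k./2) (0 < y) (motzkin_from _ _) (maxh _ _ <= _) => [] [] [] [].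
have E2 : (y.*2.+1 <= k) = (y <= k./2) && (odd k || (y != k./2)) by lia.
rewrite E2.
by move: (y <= k./2) (odd k) (y == k./2) (motzkin_from _ _) (maxh _ _ <= _)
  (has_flat_at _ _ _) => [] [] [] [] [] [].
Qed.

Lemma hf_le j y p : has_flat_at j y p -> j <= maxh y p.
Proof.
elim: p y => [|s p IH] y //=.
case/orP.
  by case: s => //= /eqP <-; rewrite leq_maxl.
by move/IH => H; rewrite (leq_trans H) // leq_maxr.
Qed.

Lemma strip_amp k p : strip k 0 p = is_motzkin p && (amp p <= k).
Proof.
rewrite strip_gen /is_motzkin /amp /height.
case: (motzkin_from 0 p) => //=.
set h := maxh 0 p.
case: (boolP (has_flat_at h 0 p)) => Hh.
- case: (boolP (has_flat_at k./2 0 p)) => Hk.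
    have := hf_le Hk; rewrite -/h => Hl.
    case: (eqVneq k./2 h) => [Ee|Ne].
      by rewrite orbF; lia.
    by rewrite orbF; lia.
  rewrite orbT andbT.
  case: (eqVneq k./2 h) => [Ee|Ne].
    by rewrite Ee Hh in Hk.
  lia.
- case: (boolP (has_flat_at k./2 0 p)) => Hk.
    have := hf_le Hk; rewrite -/h => Hl.
    case: (eqVneq k./2 h) => [Ee|Ne].
      by rewrite -Ee Hk in Hh.
    rewrite orbF; lia.
  rewrite orbT andbT; lia.
Qed.

Lemma maxh_le y p : maxh y p <= y + size p.
Proof.
elim: p y => [|s p IH] y /=; first by rewrite addn0.
rewrite geq_max leq_addr /=; apply: (leq_trans (IH _)).
by case: s => /=; lia.
Qed.

Lemma amp_le p : amp p <= (size p).*2.+1.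
Proof.
rewrite /amp /height; have := maxh_le 0 p.
case: (has_flat_at _ _ _); lia.
Qed.

Lemma size_words n w : w \in words n -> size w = n.
Proof.
elim: n w => [|n IH] w /=; first by rewrite inE => /eqP ->.
rewrite !mem_cat in_nil orbF => /or3P [] /mapP [w' /IH <- ->] //.
Qed.

Lemma count_words n (P : pred (seq step)) : count P (words n.+1) =
  count (fun w => P (Up :: w)) (words n) + count (fun w => P (Down :: w)) (words n)
  + count (fun w => P (Flat :: w)) (words n).
Proof. by rewrite /= !count_cat !count_map /= addn0 addnA. Qed.

Lemma size_words_card n : size (words n) = 3 ^ n.
Proof.
elim: n => [|n IH] //=; rewrite !size_cat !size_map IH /=; rewrite expnS; lia.
Qed.

Definition cnt k n y := count (strip k y) (words n).
Definition mcount n := count is_motzkin (words n).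

Lemma count_andb T (b : bool) (P : pred T) s :
  count (fun w => b && P w) s = if b then count P s else 0.
Proof. by case: b => //; elim: s. Qed.

Lemma cnt0 k y : cnt k 0 y = (y == 0).
Proof. by rewrite /cnt /= addn0. Qed.

Lemma cntS k n y : cnt k n.+1 y =
  if y.*2 <= k then
    cnt k n y.+1 + (if 0 < y then cnt k n y.-1 else 0)
    + (if y.*2.+1 <= k then cnt k n y else 0)
  else 0.
Proof.
rewrite /cnt count_words /=.
rewrite (count_andb ((y.*2 <= k) && true)) (count_andb ((y.*2 <= k) && (0 < y))).
rewrite (count_andb ((y.*2 <= k) && (y.*2.+1 <= k))).
by case: (y.*2 <= k); case: (0 < y); case: (y.*2.+1 <= k).
Qed.

Lemma cnt_le k n y : cnt k n y <= 3 ^ n.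
Proof. by rewrite -size_words_card count_size. Qed.

Lemma cnt_mcount k n : cnt k n 0 <= mcount n.
Proof.
apply: sub_count => p /=; rewrite strip_amp; by case/andP.
Qed.

Lemma cnt_big k n : n.*2.+1 <= k -> cnt k n 0 = mcount n.
Proof.
move=> Hk; apply: eq_in_count => p Hp; rewrite strip_amp.
have := amp_le p; rewrite (size_words Hp) => H.
by rewrite (leq_trans H Hk) andbT.
Qed.

Lemma sum_lt K a : \sum_(k < K) (k < a) = minn a K.
Proof.
elim: K => [|K IH]; first by rewrite big_ord0; lia.
by rewrite big_ord_recr /= IH; lia.
Qed.

Lemma count_split T (a b : pred T) s :
  count (fun x => a x && ~~ b x) s + count (fun x => a x && b x) s = count a s.
Proof.
elim: s => //= x s IH; case: (a x); case: (b x) => /=; lia.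
Qed.

Lemma coefA_sum n K : n.*2.+1 <= K ->
  coefA n = \sum_(k < K) (mcount n - cnt k n 0).
Proof.
move=> HK; rewrite /coefA big_seq_cond.
rewrite (eq_bigr (fun p => \sum_(k < K) (k < amp p))); last first.
  move=> p /andP [Hp _]; rewrite sum_lt; apply/esym/minn_idPl.
  have := amp_le p; rewrite (size_words Hp); lia.
rewrite -big_seq_cond.
rewrite exchange_big /=; apply: eq_bigr => k _.
have -> : \sum_(p <- words n | is_motzkin p) (k < amp p) =
    count (fun p => is_motzkin p && ~~ (amp p <= k)) (words n).
  rewrite -sum1_count big_mkcondr /=; apply: eq_bigr => p _.
  by rewrite -ltnNge; case: (k < amp p).
have <- : count (fun p => is_motzkin p && (amp p <= k)) (words n) = cnt k n 0.
  by apply: eq_count => p; rewrite /= strip_amp.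
have := count_split is_motzkin (fun p => amp p <= k) (words n).
rewrite /mcount; lia.
Qed.

From mathcomp Require Import ring lra.
Local Open Scope ring_scope.
Definition Mv (R : realType) (v : R) : R := 1 + v + v ^+ 2.
Definition phi (R : realType) (v : R) (k y : nat) : R :=
  Mv v * (v ^+ y - v ^+ (k.+1 - y)) / (1 - v ^+ k.+3).

Lemma Mv_gt0 (R : realType) (v : R) : 0 < v -> 0 < Mv v.
Proof. move=> h; rewrite /Mv; nra. Qed.

Lemma D_gt0 (R : realType) (v : R) n : 0 < v -> v < 1 -> 0 < 1 - v ^+ n.+1.
Proof.
move=> h0 h1; rewrite subr_gt0.
have h : v ^+ n <= 1 by rewrite exprn_ile1 // ltW.
have h' : 0 <= v ^+ n by rewrite exprn_ge0 // ltW.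
rewrite exprS; nra.
Qed.

Lemma phi_int (R : realType) (z v : R) k y : 0 < v -> v < 1 ->
  z * Mv v = v -> (0 < y)%N -> (y <= k)%N ->
  z * (phi v k y.-1 + phi v k y + phi v k y.+1) = phi v k y.
Proof.
move=> h0 h1 hz; case: y => // y _ Hy /=.
rewrite /phi.
have -> : (k.+1 - y = (k - y.+1).+2)%N by lia.
have -> : (k.+1 - y.+1 = (k - y.+1).+1)%N by lia.
have -> : (k.+1 - y.+2 = (k - y.+1))%N by lia.
set e := (k - y.+1)%N.
have hD := D_gt0 k.+2 h0 h1.
have hz' : z = v / Mv v by rewrite -{1}hz mulfK // gt_eqF // Mv_gt0.
rewrite hz' !exprS /Mv; field.
by rewrite -!exprS (gt_eqF hD) (gt_eqF (Mv_gt0 h0)).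
Qed.

Lemma hz_div (R : realType) (z v : R) : 0 < v -> z * Mv v = v -> z = v / Mv v.
Proof. by move=> h0 hz; rewrite -{1}hz mulfK // gt_eqF // Mv_gt0. Qed.

Lemma phi_I0 (R : realType) (z v : R) k : 0 < v -> v < 1 ->
  z * Mv v = v -> 1 + z * (phi v k 0 + phi v k 1) = phi v k 0.
Proof.
move=> h0 h1 hz; rewrite /phi subn0 subSS subn0.
have hD := D_gt0 k.+2 h0 h1.
rewrite (hz_div h0 hz) !exprS /Mv expr0; field.
by rewrite -!exprS (gt_eqF hD) (gt_eqF (Mv_gt0 h0)).
Qed.

Lemma phi_T1 (R : realType) (v : R) k y : k = y.*2.+1 -> phi v k y.+1 = 0.
Proof.
move=> ->; rewrite /phi.
have -> : (y.*2.+2 - y.+1 = y.+1)%N by lia.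
by rewrite subrr mulr0 mul0r.
Qed.

Lemma phi_T2 (R : realType) (v : R) k y : k = y.*2 -> phi v k y.+1 = - phi v k y.
Proof.
move=> ->; rewrite /phi.
have -> : (y.*2.+1 - y.+1 = y)%N by lia.
have -> : (y.*2.+1 - y = y.+1)%N by lia.
by ring.
Qed.

Definition psi (R : realType) (v : R) (k y : nat) : R :=
  if (y.*2 <= k)%N then phi v k y else 0.

Lemma psi_eq (R : realType) (z v : R) k y : 0 < v -> v < 1 ->
  z * Mv v = v -> (y.*2 <= k)%N ->
  psi v k y - (y == 0%N)%:R = z * (psi v k y.+1
    + (if (0 < y)%N then psi v k y.-1 else 0)
    + (if (y.*2.+1 <= k)%N then psi v k y else 0)).
Proof.
move=> h0 h1 hz Hy.
have E : z * (psi v k y.+1 + (if (0 < y)%N then psi v k y.-1 else 0)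
    + (if (y.*2.+1 <= k)%N then psi v k y else 0)) =
    z * (phi v k y.+1 + (if (0 < y)%N then phi v k y.-1 else 0) + phi v k y).
  rewrite /psi Hy.
  have -> : (y.-1.*2 <= k)%N by lia.
  case: (ltngtP y.+1.*2 k) => Hk.
  - by have -> : (y.*2 < k)%N by lia.
  - have Hk' : k = y.*2 \/ k = y.*2.+1 by lia.
    case: Hk' => Hk'.
      have -> : (y.*2 < k)%N = false by lia.
      rewrite (phi_T2 v Hk'); congr (_ * _); lra.
    have -> : (y.*2 < k)%N by lia.
    by rewrite (phi_T1 v Hk') add0r.
  - by have -> : (y.*2 < k)%N by lia.
rewrite E /psi Hy.
case: y Hy {E} => [|y] Hy /=.
  rewrite addr0 -{1}(phi_I0 k h0 h1 hz); ring.
have Hy' : (y.+1 <= k)%N by lia.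
rewrite -{1}(phi_int h0 h1 hz (isT : (0 < y.+1)%N) Hy') /=; ring.
Qed.

Definition Ssum (R : realType) (z : R) k N y : R :=
  \sum_(n < N) (cnt k n y)%:R * z ^+ n.

Lemma Ssum_out (R : realType) (z : R) k N y : ~~ (y.*2 <= k)%N -> Ssum z k N y = 0.
Proof.
move=> Hy; rewrite /Ssum big1 // => -[[|n] _] _ /=.
  by rewrite cnt0 (_ : (y == 0%N) = false) ?mul0r //; lia.
by rewrite cntS (negbTE Hy) mul0r.
Qed.

Lemma Ssum_shift (R : realType) (z : R) N (f : nat -> nat) :
  \sum_(i < N) (f i)%:R * z ^+ i.+1 = z * \sum_(i < N) (f i)%:R * z ^+ i.
Proof. by rewrite big_distrr; apply: eq_bigr => i _; rewrite exprS mulrCA. Qed.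

Lemma SsumS (R : realType) (z : R) k N y : (y.*2 <= k)%N ->
  Ssum z k N.+1 y = (y == 0%N)%:R + z * (Ssum z k N y.+1
    + (if (0 < y)%N then Ssum z k N y.-1 else 0)
    + (if (y.*2.+1 <= k)%N then Ssum z k N y else 0)).
Proof.
move=> Hy; rewrite /Ssum big_ord_recl /= cnt0 expr0 mulr1.
rewrite (Ssum_shift z N (fun i => cnt k i.+1 y)); congr (_ + z * _).
rewrite (eq_bigr (fun i : 'I_N => ((cnt k i y.+1 + (if (0 < y)%N then cnt k i y.-1 else 0) + (if (y.*2 < k)%N then cnt k i y else 0))%N)%:R * z ^+ i)); last by move=> i _; rewrite cntS Hy.
case: (0 < y)%N; case: (y.*2 < k)%N;
  rewrite ?addn0 ?addr0;
  rewrite -?big_split /=.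
  all: by apply: eq_bigr => i _; rewrite ?addn0 ?natrD ?mulrDl.
Qed.

Definition Bv (R : realType) (v : R) := Mv v / (1 - v).

Lemma Bv_ge0 (R : realType) (v : R) : 0 < v -> v < 1 -> 0 <= Bv v.
Proof.
move=> h0 h1; rewrite /Bv divr_ge0 // ?subr_ge0 ?ltW // Mv_gt0 //.
Qed.

Lemma Bv_eq (R : realType) (v : R) : v < 1 -> Bv v * (1 - v) = Mv v.
Proof. by move=> h1; rewrite /Bv mulfVK // gt_eqF // subr_gt0. Qed.

Lemma pow01 (R : realType) (v : R) n : 0 < v -> v < 1 -> 0 <= v ^+ n <= 1.
Proof. by move=> h0 h1; apply/andP; split; [exact: exprn_ge0 (ltW h0) | exact: exprn_ile1 (ltW h0) (ltW h1)]. Qed.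

Lemma Dge (R : realType) (v : R) n : 0 < v -> v < 1 -> 1 - v <= 1 - v ^+ n.+1.
Proof.
move=> h0 h1; have := pow01 n h0 h1 => /andP [a b].
rewrite exprS; nra.
Qed.

Lemma phi_bound (R : realType) (v : R) k y : 0 < v -> v < 1 ->
  `|phi v k y| <= Bv v.
Proof.
move=> h0 h1; rewrite /phi.
have hD := D_gt0 k.+2 h0 h1; have hD' := Dge k.+2 h0 h1.
have hM := Mv_gt0 h0; have hB := Bv_eq h1; have hB0 := Bv_ge0 h0 h1.
move: (pow01 y h0 h1) (pow01 (k.+1 - y) h0 h1) => /andP [a1 a2] /andP [b1 b2].
set a := v ^+ y in a1 a2 *; set b := v ^+ (k.+1 - y) in b1 b2 *.
set D := 1 - v ^+ k.+3 in hD hD' *.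
rewrite ler_norml; apply/andP; split.
- rewrite ler_pdivlMr //; nra.
- rewrite ler_pdivrMr //; nra.
Qed.

Lemma err_bound (R : realType) (z v : R) k N y : 0 < v -> v < 1 ->
  z * Mv v = v -> 0 <= z ->
  `|psi v k y - Ssum z k N y| <= Bv v * (3 * z) ^+ N.
Proof.
move=> h0 h1 hz hz0.
have hB0 := Bv_ge0 h0 h1.
elim: N y => [|N IH] y.
  rewrite /Ssum big_ord0 subr0 expr0 mulr1 /psi.
  by case: (y.*2 <= k)%N; rewrite ?normr0 // phi_bound.
have hq : 0 <= Bv v * (3 * z) ^+ N by rewrite mulr_ge0 // exprn_ge0 // mulr_ge0.
case Hy: (y.*2 <= k)%N; last first.
  rewrite Ssum_out ?Hy // /psi Hy subr0 normr0 mulr_ge0 // exprn_ge0 //.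
  by rewrite mulr_ge0.
rewrite SsumS // (_ : psi v k y = (psi v k y - (y == 0%N)%:R) + (y == 0%N)%:R);
  last by rewrite subrK.
rewrite (psi_eq h0 h1 hz Hy).
set T1 := psi v k y.+1 - Ssum z k N y.+1.
set T2 := (if (0 < y)%N then psi v k y.-1 - Ssum z k N y.-1 else 0).
set T3 := (if (y.*2 < k)%N then psi v k y - Ssum z k N y else 0).
have E : z * (psi v k y.+1 + (if (0 < y)%N then psi v k y.-1 else 0)
    + (if (y.*2 < k)%N then psi v k y else 0)) + (y == 0%N)%:R -
    ((y == 0%N)%:R + z * (Ssum z k N y.+1
    + (if (0 < y)%N then Ssum z k N y.-1 else 0)
    + (if (y.*2 < k)%N then Ssum z k N y else 0))) = z * (T1 + T2 + T3).
  rewrite /T1 /T2 /T3; case: (0 < y)%N; case: (y.*2 < k)%N; ring.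
rewrite E.
have b1 : `|T1| <= Bv v * (3 * z) ^+ N by apply: IH.
have b2 : `|T2| <= Bv v * (3 * z) ^+ N by rewrite /T2; case: (0 < y)%N; rewrite ?normr0 ?IH.
have b3 : `|T3| <= Bv v * (3 * z) ^+ N by rewrite /T3; case: (y.*2 < k)%N; rewrite ?normr0 ?IH.
rewrite normrM (ger0_norm hz0) exprS.
have := ler_normD (T1 + T2) T3; have := ler_normD T1 T2.
set q := Bv v * (3 * z) ^+ N.
have -> : Bv v * (3 * z * (3 * z) ^+ N) = z * (3 * q) by rewrite /q; ring.
move=> c1 c2; apply: ler_wpM2l => //; rewrite /q; lra.
Qed.

Lemma P_eq (R : realType) (z : R) N :
  \sum_(n < N) (mcount n)%:R * z ^+ n = Ssum z (N.*2) N 0.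
Proof.
rewrite /Ssum; apply: eq_bigr => n _; rewrite cnt_big //.
have := ltn_ord n; lia.
Qed.

Lemma A_eq (R : realType) (z : R) N :
  \sum_(n < N) (coefA n)%:R * z ^+ n =
  \sum_(k < N.*2) (Ssum z (N.*2) N 0 - Ssum z k N 0).
Proof.
rewrite -P_eq /Ssum.
rewrite (eq_bigr (fun n : 'I_N => \sum_(k < N.*2)
   ((mcount n)%:R * z ^+ n - (cnt k n 0)%:R * z ^+ n))); last first.
  move=> n _; rewrite (@coefA_sum n (N.*2)); last by have := ltn_ord n; lia.
  rewrite natr_sum mulr_suml; apply: eq_bigr => k _.
  by rewrite natrB ?cnt_mcount // mulrBl.
rewrite exchange_big /=; apply: eq_bigr => k _.
by rewrite sumrB.
Qed.

Definition dd (R : realType) (v : R) k := Mv v - phi v k 0.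

Lemma dd_bounds (R : realType) (v : R) k : 0 < v -> v < 1 ->
  0 <= dd v k <= Bv v * v ^+ k.
Proof.
move=> h0 h1.
have hD := D_gt0 k.+2 h0 h1; have hD' := Dge k.+2 h0 h1.
have hM := Mv_gt0 h0; have hB := Bv_eq h1; have hB0 := Bv_ge0 h0 h1.
move: (pow01 k h0 h1) => /andP [a1 a2].
have E : dd v k * (1 - v ^+ k.+3) = Mv v * v * v ^+ k * (1 - v ^+ 2).
  rewrite /dd /phi subn0 !exprS; field.
  by rewrite -!exprS gt_eqF.
move: E hD hD'; rewrite !exprS expr0 mulr1.
set a := v ^+ k in a1 a2 *; set d := dd v k => E hD hD'.
set D := 1 - v * (v * (v * a)) in E hD hD' *.
have h2 : 0 <= 1 - v ^+ 2 by rewrite subr_ge0 exprn_ile1 // ltW.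
have hMa : 0 <= Mv v * a by rewrite mulr_ge0 // ltW.
apply/andP; split.
- have : 0 <= d * D.
    rewrite E; apply: mulr_ge0 => //; apply: mulr_ge0 => //.
    by apply: mulr_ge0; apply: ltW.
  by rewrite pmulr_lge0.
- have : d * D <= Bv v * a * D.
    rewrite E.
    have t2 : v * (1 - v ^+ 2) <= 1 by rewrite expr2; nra.
    have t1 : Mv v * v * a * (1 - v ^+ 2) <= Mv v * a.
      have -> : Mv v * v * a * (1 - v ^+ 2) = (Mv v * a) * (v * (1 - v ^+ 2)) by ring.
      exact: ler_piMr.
    apply: (le_trans t1).
    have -> : Mv v * a = Bv v * a * (1 - v) by rewrite -hB; ring.
    by apply: ler_wpM2l => //; apply: mulr_ge0.
  by rewrite ler_pM2r.
Qed.

Lemma AT_bound (R : realType) (z v : R) N : 0 < v -> v < 1 ->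
  z * Mv v = v -> 0 <= z -> v ^+ 2 <= 3 * z ->
  `| \sum_(n < N) (coefA n)%:R * z ^+ n - \sum_(k < N.*2) dd v k |
    <= 6 * Bv v * (2 * (3 * z)) ^+ N.
Proof.
move=> h0 h1 hz hz0 hv2.
have hB0 := Bv_ge0 h0 h1.
set q := 3 * z.
have hq0 : 0 <= q by rewrite /q mulr_ge0.
have hqN : 0 <= q ^+ N by rewrite exprn_ge0.
rewrite A_eq -sumrB.
have term : forall k : 'I_(N.*2),
    `|Ssum z N.*2 N 0 - Ssum z k N 0 - dd v k| <= 3 * (Bv v * q ^+ N).
  move=> k.
  have e1 := err_bound (N.*2) N 0 h0 h1 hz hz0.
  have e2 := err_bound k N 0 h0 h1 hz hz0.
  rewrite /psi (leq0n N.*2) in e1; rewrite /psi (leq0n k) in e2.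
  have := dd_bounds (N.*2) h0 h1 => /andP [d1 d2].
  have d3 : Bv v * v ^+ N.*2 <= Bv v * q ^+ N.
    apply: ler_wpM2l => //; rewrite -mul2n exprM.
    by apply: (@lerXn2r R N (v ^+ 2) q) => //; rewrite nnegrE exprn_ge0 // ltW.
  have -> : Ssum z N.*2 N 0 - Ssum z k N 0 - dd v k =
    - (phi v N.*2 0 - Ssum z N.*2 N 0) - dd v N.*2 + (phi v k 0 - Ssum z k N 0).
    by rewrite /dd; ring.
  have := ler_normD (- (phi v N.*2 0 - Ssum z N.*2 N 0) - dd v N.*2)
     (phi v k 0 - Ssum z k N 0).
  have := ler_normD (- (phi v N.*2 0 - Ssum z N.*2 N 0)) (- dd v N.*2).
  rewrite !normrN (ger0_norm d1) /q.
  move: e1 e2 d2 d3; rewrite /q; lra.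
apply: (le_trans (ler_norm_sum _ _ _)).
apply: (le_trans (ler_sum _ (fun k _ => term k))).
rewrite sumr_const card_ord.
have hN : (N%:R : R) <= 2 ^+ N.
  by rewrite -natrX ler_nat ltnW // ltn_expl.
set X := Bv v * q ^+ N.
have hX : 0 <= X by rewrite /X mulr_ge0.
have -> : (3 * X) *+ N.*2 = 6 * (N%:R * X).
  by rewrite -mulr_natl -mul2n natrM; ring.
have -> : 6 * Bv v * (2 * q) ^+ N = 6 * (2 ^+ N * X) by rewrite /X exprMn; ring.
apply: ler_wpM2l => //; exact: ler_wpM2r.
Qed.

Local Open Scope classical_set_scope.
Lemma cvg_bound0 (R : realType) (u : nat -> R) (C r : R) : 0 <= r -> r < 1 ->
  (forall n, `|u n| <= C * r ^+ n) -> u @ \oo --> 0.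
Proof.
move=> r0 r1 H.
have hc : (fun n => C * r ^+ n) @ \oo --> 0.
  rewrite -(mulr0 C); apply: cvgMl_tmp; apply: cvg_expr.
  by rewrite ger0_norm.
apply: (@squeeze_cvgr _ _ _ _ (fun n => - (C * r ^+ n)) (fun n => C * r ^+ n)).
- by apply: nearW => n; rewrite -ler_norml.
- by rewrite -oppr0; apply: cvgN.
- exact: hc.
Qed.

Lemma lterm_ge0 (R : realType) (v : R) k : 0 < v -> v < 1 -> 0 <= lterm v k.
Proof.
move=> h0 h1; rewrite /lterm; apply: divr_ge0.
  by apply: exprn_ge0; exact: ltW.
exact: (ltW (D_gt0 k h0 h1)).
Qed.

Lemma lterm_le (R : realType) (v : R) k : 0 < v -> v < 1 ->
  lterm v k <= (1 - v)^-1 * v ^+ k.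
Proof.
move=> h0 h1; rewrite /lterm.
have hD := D_gt0 k h0 h1; have hD' := Dge k h0 h1.
have hv : 0 < 1 - v by rewrite subr_gt0.
move: (pow01 k h0 h1) => /andP [a1 a2].
rewrite ler_pdivrMr //.
have hw : (1 - v)^-1 * (1 - v) = 1 by rewrite mulVf // gt_eqF.
have hw0 : 0 < (1 - v)^-1 by rewrite invr_gt0.
move: hw hw0 hD hD'; rewrite exprS.
set w := (1 - v)^-1; set a := v ^+ k; set D := 1 - v * a => hw hw0 hD hD'.
have t : w * a * (1 - v) <= w * a * D.
  by apply: ler_wpM2l => //; rewrite mulr_ge0 // ltW.
have e : w * a * (1 - v) = a by rewrite -mulrA (mulrC a) mulrA hw mul1r.
rewrite e in t.
have t2 : v * a <= a by rewrite ler_piMl // ltW.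
exact: le_trans t2 t.
Qed.

Lemma series_lterm_cvg (R : realType) (v : R) : 0 < v -> v < 1 ->
  cvg (series (lterm v) @ \oo).
Proof.
move=> h0 h1.
have hv : 0 < 1 - v by rewrite subr_gt0.
apply: nondecreasing_is_cvgn.
  apply: (@nondecreasing_series _ (lterm v) predT 0) => n _ _; exact: lterm_ge0.
exists ((1 - v)^-1 * (1 - v)^-1) => _ [n _ <-].
apply: (@le_trans _ _ (series (geometric ((1 - v)^-1) v) n)).
  rewrite !seriesEord /=; apply: ler_sum => k _; exact: lterm_le.
rewrite geometric_seriesE ?lt_eqF //=.
move: (pow01 n h0 h1) => /andP [a1 a2].
rewrite -mulrA ler_pM2l ?invr_gt0 // ler_pdivrMr // mulVf ?gt_eqF //.
lra.
Qed.

Lemma dd_lterm (R : realType) (v : R) k : 0 < v -> v < 1 ->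
  dd v k = Mv v * (1 - v ^+ 2) / v ^+ 2 * lterm v k.+2.
Proof.
move=> h0 h1; have hD := D_gt0 k.+2 h0 h1.
rewrite /dd /phi /lterm subn0 !exprS expr0 mulr1; field.
by rewrite -!exprS (gt_eqF hD) /= gt_eqF.
Qed.

Lemma T_eq (R : realType) (v : R) K : 0 < v -> v < 1 ->
  \sum_(k < K) dd v k = Mv v * (1 - v ^+ 2) / v ^+ 2 *
    (series (lterm v) K.+2 - lterm v 0 - lterm v 1).
Proof.
move=> h0 h1; rewrite seriesEord /= !big_ord_recl /=.
under eq_bigr do rewrite dd_lterm //.
rewrite -mulr_sumr; congr (_ * _); ring.
Qed.

Lemma vfun_props (R : realType) (z : R) : 0 < z -> z < 1 / 3 ->
  [/\ 0 < vfun z, vfun z < 1 & z * Mv (vfun z) = vfun z].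
Proof.
move=> hz0 hz1.
have hpos : 0 <= 1 - 2 * z - 3 * z ^+ 2 by rewrite expr2; nra.
set s := Num.sqrt (1 - 2 * z - 3 * z ^+ 2).
have hs : s ^+ 2 = 1 - 2 * z - 3 * z ^+ 2 by rewrite sqr_sqrtr.
have hs0 : 0 <= s by rewrite sqrtr_ge0.
have h2z : 0 < 2 * z by rewrite mulr_gt0.
rewrite /vfun -/s.
set w := (1 - z - s) / (2 * z).
have hw : w * (2 * z) = 1 - z - s by rewrite /w mulfVK // gt_eqF.
have st : s < 1 - z.
  rewrite ltNge; apply/negP => H.
  have : (1 - z) ^+ 2 <= s ^+ 2.
    by rewrite lerXn2r // nnegrE; lra.
  rewrite hs !expr2; nra.
have st2 : 1 - 3 * z < s.
  rewrite ltNge; apply/negP => H.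
  have : s ^+ 2 <= (1 - 3 * z) ^+ 2.
    by rewrite lerXn2r // nnegrE; lra.
  rewrite hs !expr2; nra.
split.
- by rewrite /w divr_gt0 // subr_gt0.
- by rewrite /w ltr_pdivrMr // mul1r; lra.
- have E : 4 * z * (z * Mv w - w) = s ^+ 2 - (1 - 2 * z - 3 * z ^+ 2).
    have -> : 4 * z * (z * Mv w - w) =
       4 * z ^+ 2 + (w * (2 * z)) ^+ 2 + (2 * z - 2) * (w * (2 * z)).
      by rewrite /Mv; ring.
    by rewrite hw; ring.
  rewrite hs subrr in E.
  have hX : z * Mv w - w = 0.
    apply: (@mulfI _ (4 * z)); first by rewrite mulf_neq0 // gt_eqF.
    by rewrite E mulr0.
  by apply/eqP; rewrite -subr_eq0 hX.
Qed.

Lemma rhs_eq (R : realType) (v : R) : 0 < v -> v < 1 ->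
  Mv v * (1 - v ^+ 2) / v ^+ 2 *
    (limn (series (lterm v)) - lterm v 0 - lterm v 1) = rhsA v.
Proof.
move=> h0 h1.
have a : 1 - v != 0 by rewrite subr_eq0 eq_sym lt_eqF.
have b : 1 - v ^+ 2 != 0.
  rewrite subr_eq0 eq_sym lt_eqF // expr2; nra.
move: a b; rewrite /rhsA /lterm /Mv expr1 => a b.
field.
by rewrite a b gt_eqF.
Qed.

Theorem mainTheorem3 (R : realType) :
  exists eps : R, 0 < eps /\
    forall z : R, 0 < z < eps ->
      cvg (series (lterm (vfun z)) @ \oo) /\
      series (fun n => (coefA n)%:R * z ^+ n) @ \oo --> rhsA (vfun z).
Proof.
exists (1 / 12); split; first by rewrite divr_gt0.
move=> z /andP [hz0 hz1].
have hz13 : z < 1 / 3 by lra.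
have [h0 h1 hz] := vfun_props hz0 hz13.
set v := vfun z in h0 h1 hz *.
split; first exact: series_lterm_cvg.
have hM3 : Mv v <= 3 by rewrite /Mv expr2; nra.
have hv3 : v <= 3 * z by rewrite -{1}hz mulrC ler_wpM2r // ltW.
have hv2 : v ^+ 2 <= 3 * z by rewrite expr2; nra.
have hS : series (lterm v) @ \oo --> limn (series (lterm v)) :=
  series_lterm_cvg h0 h1.
set S := limn (series (lterm v)) in hS *.
set c := Mv v * (1 - v ^+ 2) / v ^+ 2.
set L := c * (S - lterm v 0 - lterm v 1).
have hT : (fun K => \sum_(k < K) dd v k) @ \oo --> L.
  have h2 : [sequence series (lterm v) (n + 2)%N]_n @ \oo --> S.
    by rewrite cvg_shiftn.
  rewrite (@eq_cvg _ _ _ _ (fun K => c * ([sequence series (lterm v) (n + 2)%N]_n K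
     - lterm v 0 - lterm v 1))); last by move=> K; rewrite /= addn2 T_eq.
  apply: cvgMl_tmp; apply: cvgB; [apply: cvgB; [exact: h2 | exact: cvg_cst]
    | exact: cvg_cst].
have hT2 := cvg_comp (muln 2) _ (@cvg_mulnl 2 isT) hT.
have hdiff : (fun N => series (fun n => (coefA n)%:R * z ^+ n) N
    - \sum_(k < 2 * N) dd v k) @ \oo --> 0.
  apply: (@cvg_bound0 _ _ (6 * Bv v) (2 * (3 * z))).
  - by rewrite !mulr_ge0 // ltW.
  - lra.
  - move=> N; rewrite seriesEord /= mul2n; exact: AT_bound (ltW hz0) hv2.
have := cvgD hdiff hT2.
rewrite add0r -(rhs_eq h0 h1) -/S -/c -/L.
move=> /(_ eventually_filter) H.
apply: cvg_trans H; apply: near_eq_cvg; apply: nearW => N /=.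
by rewrite subrK.
Qed.
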